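(* Let $M$ be a $*$-left Ehresmann monoid with $M=\langle H\rangle_{(2)}$ for an atomic subset $H$. If $m=h_1h_2\cdots h_n$ with $h_i\in H$ for $1\le i\le n$, then $m$ has an expression $m=k_1\cdots k_p$ in $H$-canonical form with $p\le n$.
   Context: A $*$-left Ehresmann monoid is a monoid $M$ with unary operations $+,*$ such that $x^+x=x$, $(x^+y^+)^+=x^+y^+$, $x^+y^+=y^+x^+$, $(xy)^+=(xy^+)^+$, $xx^*=x$, $(x^* )^*=x^*$, $x^*y^*=y^*x^*$, $(xy^* )^*y^*=(xy^* )^*$, $(x^* )^+=x^*$, $(x^+)^*=x^+$. Projections: $E=\{a^+\}=\{a^*\}$, ordered by $e\le f$ iff $ef=e$; $\sigma$ is the least monoid congruence containing $E\times E$; $\langle H\rangle_{(2)}$ is the subsemigroup generated by $H$. $H$ is atomic if: (H1) $E\subseteq H$; (H2) $h\in H,e\in E$ imply $he\in H$ and $(he)^*=h^*e$; (H3) if $h\in H$, $k\in H\setminus E$, $h^*\ge k^+$ then $hk\in H$ and $(hk)^*=k^*$; (H4) every $m\in M$ is $\sigma$-related to some $h\in H$; (H5) if $h,k,w\in H$, $hk\,\sigma\,w$ and $k^*=w^*$, then some $u\in H$ has $u\,\sigma\,h$ and $u^*\ge k^+$. An expression $m=h_1\cdots h_n$ ($n\ge1$, $h_i\in H$) is in $H$-canonical form if $h_i^*<h_{i+1}^+$ for $1\le i<n$ and $h_i\notin E$ for $2\le i\le n$. *)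

(* Defs.v *)
From mathcomp Require Import all_boot.
Set Implicit Arguments. Unset Strict Implicit. Unset Printing Implicit Defensive.

Record StarLeftEhresmann (T : Type) (mul : T -> T -> T) (one : T)
    (plus star : T -> T) : Prop := {
  sle_assoc : forall x y z, mul x (mul y z) = mul (mul x y) z;
  sle_mul1l : forall x, mul one x = x;
  sle_mulr1 : forall x, mul x one = x;
  sle_plus_l : forall x, mul (plus x) x = x;
  sle_plus_idem : forall x y, plus (mul (plus x) (plus y)) = mul (plus x) (plus y);
  sle_plus_comm : forall x y, mul (plus x) (plus y) = mul (plus y) (plus x);
  sle_plus_mul : forall x y, plus (mul x y) = plus (mul x (plus y));
  sle_star_r : forall x, mul x (star x) = x;
  sle_star_star : forall x, star (star x) = star x;
  sle_star_comm : forall x y, mul (star x) (star y) = mul (star y) (star x);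
  sle_star_mul : forall x y, mul (star (mul x (star y))) (star y) = star (mul x (star y));
  sle_plus_star : forall x, plus (star x) = star x;
  sle_star_plus : forall x, star (plus x) = plus x
}.

Section Defs.
Variables (T : Type) (mul : T -> T -> T) (one : T) (plus star : T -> T).

Definition inE (x : T) : Prop := exists a, x = plus a.

Definition ple (e f : T) : Prop := mul e f = e.
Definition plt (e f : T) : Prop := ple e f /\ e <> f.

Definition monoid_congruence (R : T -> T -> Prop) : Prop :=
  (forall x, R x x) /\ (forall x y, R x y -> R y x) /\
  (forall x y z, R x y -> R y z -> R x z) /\
  (forall x y z, R x y -> R (mul z x) (mul z y) /\ R (mul x z) (mul y z)).

Definition sigma (x y : T) : Prop :=
  forall R, monoid_congruence R -> (forall e f, inE e -> inE f -> R e f) -> R x y.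

Definition lprod (s : seq T) : T := foldr mul one s.

Definition all_in (H : T -> Prop) (s : seq T) : Prop :=
  forall i, i < size s -> H (nth one s i).

(* M = <H>_(2): every element is a product of a nonempty word over H *)
Definition generates2 (H : T -> Prop) : Prop :=
  forall m, exists s, 0 < size s /\ all_in H s /\ m = lprod s.

Definition atomic (H : T -> Prop) : Prop :=
  (forall e, inE e -> H e) /\
  (forall h e, H h -> inE e -> H (mul h e) /\ star (mul h e) = mul (star h) e) /\
  (forall h k, H h -> H k -> ~ inE k -> ple (plus k) (star h) ->
              H (mul h k) /\ star (mul h k) = star k) /\
  (forall m, exists h, H h /\ sigma m h) /\
  (forall h k w, H h -> H k -> H w -> sigma (mul h k) w -> star k = star w ->
              exists u, H u /\ sigma u h /\ ple (plus k) (star u)).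

Definition canonical_form (H : T -> Prop) (s : seq T) : Prop :=
  0 < size s /\ all_in H s /\
  (forall i, i.+1 < size s -> plt (star (nth one s i)) (plus (nth one s i.+1))) /\
  (forall i, 0 < i < size s -> ~ inE (nth one s i)).

End Defs.

(* Main.v *)
Require Import Defs.
From mathcomp Require Import all_boot.
From Stdlib Require Import Lia.
From Stdlib Require Import Classical.
From mathcomp Require Import zify.

Theorem mainTheorem9 (T : Type) (mul : T -> T -> T) (one : T) (plus star : T -> T)
  (HM : StarLeftEhresmann mul one plus star) (H : T -> Prop)
  (Hat : atomic mul plus star H) (Hgen : generates2 mul one H)
  (m : T) (hs : seq T) :
  0 < size hs -> all_in one H hs -> m = lprod mul one hs ->
  exists ks : seq T, canonical_form mul one plus star H ks /\
    size ks <= size hs /\ m = lprod mul one ks.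
Proof.
case: HM => assoc mul1l mulr1 plusl plusidem pluscomm plusmul starr starstar
  starcomm starmul plusstar starplus.
case: Hat => H1 [H2 [H3 _]].
have Estar : forall e, Defs.inE plus e -> star e = e.
  by move=> e [a ->]; rewrite starplus.
have Eplus : forall e, Defs.inE plus e -> plus e = e.
  move=> e [a ->]. by rewrite -{1}(starplus a) plusstar starplus.
have Eidem : forall e, Defs.inE plus e -> mul e e = e.
  by move=> e he; rewrite -{1}(Eplus e he) plusl.
have EM : forall e f, Defs.inE plus e -> Defs.inE plus f -> Defs.inE plus (mul e f).
  move=> e f he hf; exists (mul e f).
  by rewrite -(Eplus e he) -(Eplus f hf) plusidem.
have Ecomm : forall e f, Defs.inE plus e -> Defs.inE plus f -> mul e f = mul f e.
  move=> e f he hf; by rewrite -(Eplus e he) -(Eplus f hf) pluscomm.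
have Es : forall x, Defs.inE plus (star x).
  by move=> x; exists (star x); rewrite plusstar.
have Ep : forall x, Defs.inE plus (plus x) by move=> x; exists x.
have pletr : forall a b c, ple mul a b -> ple mul b c -> ple mul a c.
  by move=> a b c; rewrite /ple => hab hbc; rewrite -hab -assoc hbc.
have lprodA : forall (L : seq T) a, foldr mul a L = mul (foldr mul one L) a.
  elim=> [|y L IH] a /=; first by rewrite mul1l.
  by rewrite IH assoc.
have lprod_rcons : forall L k, lprod mul one (rcons L k) = mul (lprod mul one L) k.
  by move=> L k; rewrite /lprod foldr_rcons lprodA mulr1.
have key : forall L x, all_in one H L -> H x -> exists L',
    canonical_form mul one plus star H L' /\
    lprod mul one L' = mul (lprod mul one L) x /\ size L' <= (size L).+1 /\
    ple mul (star (last one L')) (star x).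
  elim/last_ind=> [|L k IH] x hL hx.
    exists [:: x]; split; last split; last split.
    - split; first by []. split; first by case=> [|[|i]].
      split; first by case=> [|i]. by case=> [|[|i]].
    - by rewrite /= mul1l.
    - by [].
    - by rewrite /= /ple Eidem.
  have hL0 : all_in one H L.
    move=> i hi; have := hL i; rewrite size_rcons nth_rcons hi; apply; lia.
  have hk : H k.
    have := hL (size L); rewrite size_rcons nth_rcons ltnn eqxx; apply; lia.
  rewrite lprod_rcons size_rcons.
  have [xE|xnE] := Classical_Prop.classic (Defs.inE plus x).
    have [hkx skx] := H2 k x hk xE.
    have [L' [c [p [s l]]]] := IH (mul k x) hL0 hkx.
    exists L'; split; first by []; split; first by rewrite p assoc.
    split; first lia.
    apply: pletr l _; rewrite skx (Estar x xE) /ple -assoc (Eidem x xE) //.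
  have [xle|xnle] := Classical_Prop.classic (ple mul (plus x) (star k)).
    have [hkx skx] := H3 k x hk hx xnE xle.
    have [L' [c [p [s l]]]] := IH (mul k x) hL0 hkx.
    exists L'; split; first by []; split; first by rewrite p assoc.
    split; first lia. by rewrite -skx.
  set e := mul (star k) (plus x).
  have eE : Defs.inE plus e by apply: EM.
  have [hk' sk'] := H2 k e hk eE.
  have sk'e : star (mul k e) = e by rewrite sk' /e assoc Eidem.
  have [L' [[c1 [c2 [c3 c4]]] [p [s l]]]] := IH (mul k e) hL0 hk'.
  rewrite sk'e in l.
  have lE : Defs.inE plus (star (last one L')) by [].
  have ex : ple mul e (plus x) by rewrite /ple /e -assoc Eidem.
  have ene : e <> plus x.
    move=> he; apply: xnle; rewrite /ple Ecomm // -/e he //.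
  have lt : plt mul (star (last one L')) (plus x).
    split; first exact: pletr l ex.
    move=> eq; apply: ene.
    have h1 : ple mul (plus x) e by rewrite -eq.
    rewrite /ple in h1 ex; by rewrite -ex Ecomm // h1.
  exists (rcons L' x); split; last split; last split.
  - split; first by rewrite size_rcons.
    split.
      move=> i; rewrite size_rcons nth_rcons => hi.
      case: ifP => hi'; first exact: c2.
      have -> : i == size L' by lia.
      done.
    split.
      move=> i; rewrite size_rcons => hi; rewrite !nth_rcons.
      case: (ltnP i.+1 (size L')) => hi1.
        have -> : i < size L' by lia.
        exact: c3.
      have ei : i = (size L').-1 by lia.
      have -> : i < size L' by lia.
      have -> : i.+1 == size L' by lia.
      by rewrite ei nth_last.
    move=> i; rewrite size_rcons nth_rcons => /andP [i0 hi].
    case: ifP => hi'; first by apply: c4; rewrite i0 hi'.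
    have -> : i == size L' by lia.
    done.
  - rewrite lprod_rcons p -!assoc; congr (mul _ _).
    rewrite /e assoc starr -{2}(plusl x) assoc // plusl -assoc plusl //.
  - rewrite size_rcons; lia.
  - rewrite last_rcons /ple Eidem //.
move=> hsz hall ->.
case/lastP: hs hsz hall => [|L x] hsz hall; first by [].
have hL0 : all_in one H L.
  move=> i hi; have := hall i; rewrite size_rcons nth_rcons hi; apply; lia.
have hx : H x.
  have := hall (size L); rewrite size_rcons nth_rcons ltnn eqxx; apply; lia.
have [L' [c [p [s _]]]] := key L x hL0 hx.
exists L'; split; first by []; rewrite size_rcons lprod_rcons p; split => //.
Qed.
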